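(* Let $X$ be a quantity space over a field $K$. (1) $X/{\sim}$ is a free abelian group of finite rank. (2) Any two bases for $X/{\sim}$ have the same number of elements, any basis for $X$ has the same number of elements as any basis for $X/{\sim}$, and any two bases for $X$ have the same number of elements.
   Context: A scalable monoid over a field $K$ is a monoid $X$ (written multiplicatively, unit $\mathbf{1}=1_X$) with a map $K\times X\to X$, $(\alpha,x)\mapsto\alpha x$, such that $1x=x$, $\alpha(\beta x)=(\alpha\beta)x$, and $\alpha(xy)=(\alpha x)y=x(\alpha y)$ for all $\alpha,\beta\in K$, $x,y\in X$. It is commutative if $xy=yx$ for all $x,y$. For invertible $b$, $b^0=\mathbf{1}$ and negative powers are powers of $b^{-1}$. A (finite) basis of a commutative scalable monoid $X$ over $K$ is a finite set $B=\{b_1,\ldots,b_n\}$ of invertible elements of $X$ such that every $x\in X$ has an expansion $x=\mu\prod_{i=1}^n b_i^{k_i}$ with $\mu\in K$ and $k_1,\ldots,k_n\in\mathbb{Z}$, and this expansion is unique (i.e. $\mu$ and $(k_1,\ldots,k_n)$ are uniquely determined by $x$). A quantity space over $K$ is a commutative scalable monoid over $K$ that has a finite basis. Elements $x,y$ are commensurable, $x\sim y$, if $\alpha x=\beta y$ for some $\alpha,\beta\in K$; this is an equivalence relation and a congruence, its classes are called realms (dimensions), $[x]$ is the realm of $x$, and $X/{\sim}$ is the set of realms with product $[x][y]=[xy]$ and unit $[\mathbf{1}]$. A basis of $X/{\sim}$ is a finite set $\{c_1,\ldots,c_n\}\subseteq X/{\sim}$ such that every element of $X/{\sim}$ can be written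 uniquely as $\prod_{i=1}^n c_i^{k_i}$ with $k_i\in\mathbb{Z}$. *)

(* Defs.v *)
From HB Require Import structures.
From mathcomp Require Import all_boot all_order all_algebra.
From Stdlib Require Import ClassicalEpsilon.
Set Implicit Arguments. Unset Strict Implicit. Unset Printing Implicit Defensive.
Import GRing.Theory.
Local Open Scope ring_scope.

Record scalable_monoid (K : fieldType) := ScalableMonoid {
  sm_car :> Type;
  sm_mul : sm_car -> sm_car -> sm_car;
  sm_one : sm_car;
  sm_scale : K -> sm_car -> sm_car;
  sm_mulA : forall x y z, sm_mul x (sm_mul y z) = sm_mul (sm_mul x y) z;
  sm_mul1x : forall x, sm_mul sm_one x = x;
  sm_mulx1 : forall x, sm_mul x sm_one = x;
  sm_scale1 : forall x, sm_scale 1 x = x;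
  sm_scaleA : forall (a b : K) x, sm_scale a (sm_scale b x) = sm_scale (a * b) x;
  sm_scale_mull : forall (a : K) x y, sm_scale a (sm_mul x y) = sm_mul (sm_scale a x) y;
  sm_scale_mulr : forall (a : K) x y, sm_scale a (sm_mul x y) = sm_mul x (sm_scale a y)
}.

Section MonoidNotions.
Variables (M : Type) (mul : M -> M -> M) (one : M).

Definition mprod (n : nat) (f : 'I_n -> M) : M :=
  foldr mul one [seq f i | i <- enum 'I_n].

(* integer power b^k of an invertible b, where b' is the inverse of b *)
Definition zpow (b b' : M) (k : int) : M :=
  match k with
  | Posz m => iter m (mul b) one
  | Negz m => iter m.+1 (mul b') one
  end.

Definition is_inverse (b b' : M) : Prop := mul b b' = one /\ mul b' b = one.

Definition is_monoid_basis (n : nat) (c : 'I_n -> M) : Prop :=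
  exists c' : 'I_n -> M,
    (forall i, is_inverse (c i) (c' i)) /\
    (forall m : M, exists k : 'I_n -> int,
        m = mprod (fun i => zpow (c i) (c' i) (k i))) /\
    (forall k l : 'I_n -> int,
        mprod (fun i => zpow (c i) (c' i) (k i)) =
        mprod (fun i => zpow (c i) (c' i) (l i)) -> forall i, k i = l i).

Definition is_abelian_group : Prop :=
  (forall x y z, mul x (mul y z) = mul (mul x y) z) /\
  (forall x, mul one x = x /\ mul x one = x) /\
  (forall x y, mul x y = mul y x) /\
  (forall x, exists y, is_inverse x y).

Definition is_free_abelian_finite_rank : Prop :=
  is_abelian_group /\ exists (n : nat) (c : 'I_n -> M), is_monoid_basis c.
End MonoidNotions.

Section Scalable.
Variables (K : fieldType) (X : scalable_monoid K).
Local Notation mulX := (@sm_mul K X).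
Local Notation oneX := (@sm_one K X).
Local Notation scX := (@sm_scale K X).

Definition sm_commutative : Prop := forall x y : X, mulX x y = mulX y x.

Definition is_qbasis (n : nat) (b : 'I_n -> X) : Prop :=
  exists b' : 'I_n -> X,
    (forall i, is_inverse mulX oneX (b i) (b' i)) /\
    (forall x : X, exists (mu : K) (k : 'I_n -> int),
        x = scX mu (mprod mulX oneX (fun i => zpow mulX oneX (b i) (b' i) (k i)))) /\
    (forall (mu nu : K) (k l : 'I_n -> int),
        scX mu (mprod mulX oneX (fun i => zpow mulX oneX (b i) (b' i) (k i))) =
        scX nu (mprod mulX oneX (fun i => zpow mulX oneX (b i) (b' i) (l i))) ->
        mu = nu /\ forall i, k i = l i).

Definition quantity_space : Prop :=
  sm_commutative /\ exists (n : nat) (b : 'I_n -> X), is_qbasis b.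

Definition commensurable (x y : X) : Prop :=
  exists a b : K, scX a x = scX b y.

(* realms: equivalence classes, X/~ *)
Definition realm_set := { R : X -> Prop | exists x : X, R = commensurable x }.

Definition realm_of (x : X) : realm_set :=
  exist _ (commensurable x) (ex_intro _ x erefl).

Definition realm_rep (R : realm_set) : X :=
  proj1_sig (constructive_indefinite_description _ (proj2_sig R)).

Definition realm_mul (R S : realm_set) : realm_set :=
  realm_of (mulX (realm_rep R) (realm_rep S)).
Definition realm_one : realm_set := realm_of oneX.
End Scalable.

(* Main.v *)
Require Import Defs.
From mathcomp Require Import all_boot all_order all_algebra.
From mathcomp Require Import zify.
From Stdlib Require Import ClassicalEpsilon FunctionalExtensionality PropExtensionality ProofIrrelevance.
Set Implicit Arguments. Unset Strict Implicit. Unset Printing Implicit Defensive.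
Import GRing.Theory.
Local Open Scope ring_scope.

Section CM.
Variables (M : Type) (mul : M -> M -> M) (one : M).
Hypotheses (mulA : forall x y z, mul x (mul y z) = mul (mul x y) z)
  (mul1 : forall x, mul one x = x) (mulx1 : forall x, mul x one = x)
  (mulC : forall x y, mul x y = mul y x).

Lemma mul4 a b c d : mul (mul a b) (mul c d) = mul (mul a c) (mul b d).
Proof.
by rewrite -!mulA; congr (mul a); rewrite !mulA (mulC b c).
Qed.

Lemma foldr_mul (I : Type) (s : seq I) (f g : I -> M) :
  foldr mul one [seq mul (f i) (g i) | i <- s] =
  mul (foldr mul one (map f s)) (foldr mul one (map g s)).
Proof.
elim: s => [|x s IH] /=; first by rewrite mul1.
by rewrite IH mul4.
Qed.

Lemma mprod_mul n (f g : 'I_n -> M) :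
  mprod mul one (fun i => mul (f i) (g i)) = mul (mprod mul one f) (mprod mul one g).
Proof. exact: foldr_mul. Qed.

Lemma iterD x m p : iter (m + p) (mul x) one = mul (iter m (mul x) one) (iter p (mul x) one).
Proof.
elim: m => [|m IH]; first by rewrite add0n /= mul1.
by rewrite addSn /= IH mulA.
Qed.

Lemma iter_inv b b' m : is_inverse mul one b b' ->
  mul (iter m (mul b) one) (iter m (mul b') one) = one.
Proof.
move=> [h1 h2]; elim: m => [|m IH] /=; first by rewrite mul1.
by rewrite mul4 h1 IH mul1.
Qed.

Lemma zpow_split b b' (k : int) (m p : nat) : is_inverse mul one b b' ->
  k = m%:Z - p%:Z ->
  zpow mul one b b' k = mul (iter m (mul b) one) (iter p (mul b') one).
Proof.
move=> hinv; case: k => [q|q] /= e.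
  have -> : m = (q + p)%N by lia.
  by rewrite iterD -mulA iter_inv // mulx1.
have -> : p = (m + q.+1)%N by lia.
by rewrite iterD mulA iter_inv // mul1.
Qed.

Lemma int_split (k : int) : exists m p : nat, k = m%:Z - p%:Z.
Proof.
case: k => [q|q]; first by exists q, 0%N; lia.
by exists 0%N, q.+1; lia.
Qed.

Lemma zpowD b b' (k l : int) : is_inverse mul one b b' ->
  zpow mul one b b' (k + l) = mul (zpow mul one b b' k) (zpow mul one b b' l).
Proof.
move=> hinv.
have [m1 [p1 e1]] := int_split k; have [m2 [p2 e2]] := int_split l.
rewrite (zpow_split hinv e1) (zpow_split hinv e2) (@zpow_split _ _ _ (m1 + m2) (p1 + p2)) //.
  by rewrite !iterD mul4.
by rewrite e1 e2; lia.
Qed.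

Lemma mprodD n (b b' : 'I_n -> M) (hinv : forall i, is_inverse mul one (b i) (b' i))
  (k l : 'I_n -> int) :
  mprod mul one (fun i => zpow mul one (b i) (b' i) (k i + l i)) =
  mul (mprod mul one (fun i => zpow mul one (b i) (b' i) (k i)))
      (mprod mul one (fun i => zpow mul one (b i) (b' i) (l i))).
Proof.
rewrite -mprod_mul; congr (mprod _ _ _).
by apply: functional_extensionality => i; rewrite zpowD.
Qed.

Lemma mprod0 n (b b' : 'I_n -> M) :
  mprod mul one (fun i => zpow mul one (b i) (b' i) 0) = one.
Proof.
rewrite /mprod /=; elim: (enum 'I_n) => [|x s IH] //=.
by rewrite IH mul1.
Qed.

Definition ishom n (phi : ('I_n -> int) -> M) :=
  forall k l, phi (fun i => k i + l i) = mul (phi k) (phi l).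

Lemma mod2_cases (a : int) : (a %% 2)%Z = 0 \/ (a %% 2)%Z = 1.
Proof. lia. Qed.

Lemma rank_le m n (phi : ('I_m -> int) -> M) (psi : ('I_n -> int) -> M) :
  ishom phi -> ishom psi -> injective phi -> injective psi ->
  (forall x, exists k, x = phi k) -> (forall x, exists k, x = psi k) -> (m <= n)%N.
Proof.
move=> hphi hpsi iphi ipsi sphi spsi.
pose psiinv x := proj1_sig (constructive_indefinite_description _ (spsi x)).
have psiK x : x = psi (psiinv x) by rewrite /psiinv; case: constructive_indefinite_description.
pose lift (v : {ffun 'I_m -> bool}) := fun i => ((v i : nat)%:Z).
pose g (v : {ffun 'I_m -> bool}) : {ffun 'I_n -> bool} :=
  [ffun j => ((psiinv (phi (lift v)) j %% 2)%Z == 1)].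
have ig : injective g.
  move=> v w /ffunP e.
  set a := psiinv (phi (lift v)); set a' := psiinv (phi (lift w)).
  have em : forall j, (a j %% 2)%Z = (a' j %% 2)%Z.
    move=> j; have := e j; rewrite !ffunE.
    by case: (mod2_cases (a j)) => ->; case: (mod2_cases (a' j)) => -> //.
  pose z j := divz (a j) 2 - divz (a' j) 2.
  have ea : a = (fun j => (a' j + z j) + z j).
    apply: functional_extensionality => j; have := em j; rewrite /z; lia.
  have [y ey] := sphi (psi z).
  have : phi (lift v) = phi (fun i => (lift w i + y i) + y i).
    by rewrite !hphi -ey (psiK (phi (lift v))) (psiK (phi (lift w))) -/a -/a' ea !hpsi.
  move/iphi => el; apply/ffunP => i.
  have := congr1 (fun f => f i) el; rewrite /lift /=.
  by case: (v i); case: (w i) => //=; lia.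
have := leq_card g ig.
rewrite !card_ffun !card_bool !card_ord.
by rewrite leq_exp2l.
Qed.
End CM.

Section Hom.
Variables (M : Type) (mul : M -> M -> M) (one : M).
Variables (N : Type) (mul' : N -> N -> N) (one' : N).
Variable h : M -> N.
Hypotheses (hmul : forall x y, h (mul x y) = mul' (h x) (h y)) (hone : h one = one').

Lemma hom_iter b m : h (iter m (mul b) one) = iter m (mul' (h b)) one'.
Proof. by elim: m => [|m IH] //=; rewrite hmul IH. Qed.

Lemma hom_zpow b b' k : h (zpow mul one b b' k) = zpow mul' one' (h b) (h b') k.
Proof. by case: k => q; rewrite /zpow hom_iter. Qed.

Lemma hom_mprod n (f : 'I_n -> M) : h (mprod mul one f) = mprod mul' one' (fun i => h (f i)).
Proof.
rewrite /mprod; elim: (enum 'I_n) => [|x s IH] //=.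
by rewrite hmul IH.
Qed.
End Hom.

Section CM2.
Variables (M : Type) (mul : M -> M -> M) (one : M).
Hypotheses (mulA : forall x y z, mul x (mul y z) = mul (mul x y) z)
  (mul1 : forall x, mul one x = x) (mulx1 : forall x, mul x one = x)
  (mulC : forall x y, mul x y = mul y x).

Lemma basis_le p q (c : 'I_p -> M) (d : 'I_q -> M) :
  is_monoid_basis mul one c -> is_monoid_basis mul one d -> (p <= q)%N.
Proof.
move=> [c' [ci [ce cu]]] [d' [di [de du]]].
apply: (@rank_le M mul p q (fun k => mprod mul one (fun i => zpow mul one (c i) (c' i) (k i)))
   (fun k => mprod mul one (fun i => zpow mul one (d i) (d' i) (k i)))).
- by move=> k l; apply: mprodD.
- by move=> k l; apply: mprodD.
- by move=> k l e; apply: functional_extensionality; apply: cu.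
- by move=> k l e; apply: functional_extensionality; apply: du.
- by move=> x; have [k ->] := ce x; exists k.
- by move=> x; have [k ->] := de x; exists k.
Qed.

Lemma basis_eq p q (c : 'I_p -> M) (d : 'I_q -> M) :
  is_monoid_basis mul one c -> is_monoid_basis mul one d -> p = q.
Proof. by move=> hc hd; apply/eqP; rewrite eqn_leq (basis_le hc hd) (basis_le hd hc). Qed.
End CM2.

Lemma realm_eq (K : fieldType) (X : scalable_monoid K) (R S : realm_set X) :
  sval R = sval S -> R = S.
Proof.
case: R => P HP; case: S => Q HQ /= e; subst Q.
by rewrite (proof_irrelevance _ HP HQ).
Qed.

Lemma rep_spec (K : fieldType) (X : scalable_monoid K) (R : realm_set X) :
  R = realm_of (realm_rep R).
Proof.
apply: realm_eq; rewrite /realm_rep /=.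
by case: constructive_indefinite_description.
Qed.

Section QS.
Variables (K : fieldType) (X : scalable_monoid K).
Local Notation mulX := (@sm_mul K X).
Local Notation oneX := (@sm_one K X).
Local Notation scX := (@sm_scale K X).
Hypothesis comm : sm_commutative X.
Variables (n : nat) (b b' : 'I_n -> X).
Hypotheses (hinv : forall i, is_inverse mulX oneX (b i) (b' i))
  (hex : forall x : X, exists (mu : K) (k : 'I_n -> int),
        x = scX mu (mprod mulX oneX (fun i => zpow mulX oneX (b i) (b' i) (k i))))
  (huniq : forall (mu nu : K) (k l : 'I_n -> int),
        scX mu (mprod mulX oneX (fun i => zpow mulX oneX (b i) (b' i) (k i))) =
        scX nu (mprod mulX oneX (fun i => zpow mulX oneX (b i) (b' i) (l i))) ->
        mu = nu /\ forall i, k i = l i).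

Definition mon k := mprod mulX oneX (fun i => zpow mulX oneX (b i) (b' i) (k i)).

Lemma monD k l : mon (fun i => k i + l i) = mulX (mon k) (mon l).
Proof. apply: mprodD => //; [exact: sm_mulA|exact: sm_mul1x|exact: sm_mulx1]. Qed.

Lemma mon0 : mon (fun _ => 0) = oneX.
Proof. apply: mprod0; exact: sm_mul1x. Qed.

Lemma hex' x : exists k, exists mu, x = scX mu (mon k).
Proof. by have [mu [k e]] := hex x; exists k, mu. Qed.

Definition E x := sval (constructive_indefinite_description _ (hex' x)).

Lemma E_spec x : exists mu, x = scX mu (mon (E x)).
Proof. by rewrite /E; case: constructive_indefinite_description. Qed.

Lemma E_scmon mu k : E (scX mu (mon k)) = k.
Proof.
have [nu e] := E_spec (scX mu (mon k)).
have [_ hk] := huniq e.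
by apply: functional_extensionality => i; rewrite hk.
Qed.

Lemma E_mon k : E (mon k) = k.
Proof. by rewrite -{1}(sm_scale1 (mon k)) E_scmon. Qed.

Lemma E_one : E oneX = (fun _ => 0).
Proof. by rewrite -mon0 E_mon. Qed.

Lemma E_scale a x : E (scX a x) = E x.
Proof.
have [mu e] := E_spec x.
by rewrite {1}e sm_scaleA E_scmon.
Qed.

Lemma E_mul x y : E (mulX x y) = (fun i => E x i + E y i).
Proof.
have [mu ex] := E_spec x; have [nu ey] := E_spec y.
rewrite {1}ex {1}ey -sm_scale_mull -sm_scale_mulr sm_scaleA -monD.
by rewrite E_scmon.
Qed.

Lemma comm_E x y : commensurable x y <-> E x = E y.
Proof.
split.
  by move=> [a [c e]]; rewrite -(E_scale a x) e E_scale.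
move=> e; have [mu ex] := E_spec x; have [nu ey] := E_spec y.
exists nu, mu; rewrite ex ey !sm_scaleA e.
by rewrite mulrC.
Qed.

Lemma realm_ofE x y : realm_of x = realm_of y <-> E x = E y.
Proof.
split.
  move=> e; have := congr1 (@sval _ _) e => /= e'.
  apply/comm_E; rewrite e'; exact/comm_E.
move=> e; apply: realm_eq => /=.
apply: functional_extensionality => z; apply: propositional_extensionality.
by rewrite !comm_E e.
Qed.

Lemma E_rep x : E (realm_rep (realm_of x)) = E x.
Proof. by apply/realm_ofE; rewrite -rep_spec. Qed.

Lemma realm_mulE x y : realm_mul (realm_of x) (realm_of y) = realm_of (mulX x y).
Proof. by apply/realm_ofE; rewrite !E_mul !E_rep. Qed.

Lemma realm_ex (R : realm_set X) : exists r, R = realm_of r.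
Proof. by exists (realm_rep R); exact: rep_spec. Qed.

Lemma realm_group : is_abelian_group (@realm_mul K X) (realm_one X).
Proof.
rewrite /realm_one; split; [|split; [|split]].
- move=> R S T; have [r ->] := realm_ex R; have [s ->] := realm_ex S.
  have [t ->] := realm_ex T.
  by rewrite !realm_mulE sm_mulA.
- by move=> R; have [r ->] := realm_ex R; rewrite !realm_mulE sm_mul1x sm_mulx1.
- by move=> R S; have [r ->] := realm_ex R; have [s ->] := realm_ex S; rewrite !realm_mulE comm.
- move=> R; have [r ->] := realm_ex R.
  exists (realm_of (mon (fun i => - E r i))).
  by split; rewrite realm_mulE; apply/realm_ofE; rewrite E_mul E_mon E_one;
    apply: functional_extensionality => i; rewrite ?subrr // addNr.
Qed.

Lemma Pc k : mprod (@realm_mul K X) (realm_one X)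
   (fun i => zpow (@realm_mul K X) (realm_one X) (realm_of (b i)) (realm_of (b' i)) (k i))
   = realm_of (mon k).
Proof.
rewrite /mon (@hom_mprod _ mulX oneX _ (@realm_mul K X) (realm_one X) (@realm_of K X)).
- congr (mprod _ _ _); apply: functional_extensionality => i.
  rewrite (@hom_zpow _ mulX oneX _ (@realm_mul K X) (realm_one X) (@realm_of K X)) //.
  by move=> x y; rewrite realm_mulE.
- by move=> x y; rewrite realm_mulE.
- by [].
Qed.

Lemma realm_basis : is_monoid_basis (@realm_mul K X) (realm_one X) (fun i => realm_of (b i)).
Proof.
exists (fun i => realm_of (b' i)); split; [|split].
- move=> i; have [h1 h2] := hinv i.
  by split; rewrite realm_mulE ?h1 ?h2.
- move=> R; have [r ->] := realm_ex R.
  by exists (E r); rewrite Pc; apply/realm_ofE; rewrite E_mon.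
- move=> k l; rewrite !Pc => /realm_ofE; rewrite !E_mon => ->.
  by [].
Qed.
End QS.

Lemma qbasis_realm (K : fieldType) (X : scalable_monoid K) (n : nat) (b : 'I_n -> X) :
  sm_commutative X -> is_qbasis b ->
  is_monoid_basis (@realm_mul K X) (realm_one X) (fun i => realm_of (b i)).
Proof. by move=> hc [b' [hi [he hu]]]; apply: (@realm_basis K X hc n b b'). Qed.

Lemma qs_group (K : fieldType) (X : scalable_monoid K) :
  quantity_space X -> is_abelian_group (@realm_mul K X) (realm_one X).
Proof. by move=> [hc [n [b [b' [hi [he hu]]]]]]; apply: (@realm_group K X hc n b b'). Qed.

Theorem mainTheorem15 (K : fieldType) (X : scalable_monoid K) :
  quantity_space X ->
  (* (1) X/~ is a free abelian group of finite rank *)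
  is_free_abelian_finite_rank (@realm_mul K X) (realm_one X) /\
  (* (2a) any two bases of X/~ have the same number of elements *)
  (forall (n m : nat) (c : 'I_n -> realm_set X) (d : 'I_m -> realm_set X),
      is_monoid_basis (@realm_mul K X) (realm_one X) c ->
      is_monoid_basis (@realm_mul K X) (realm_one X) d -> n = m) /\
  (* (2b) any basis of X has as many elements as any basis of X/~ *)
  (forall (n m : nat) (b : 'I_n -> X) (c : 'I_m -> realm_set X),
      is_qbasis b -> is_monoid_basis (@realm_mul K X) (realm_one X) c -> n = m) /\
  (* (2c) any two bases of X have the same number of elements *)
  (forall (n m : nat) (b : 'I_n -> X) (b' : 'I_m -> X),
      is_qbasis b -> is_qbasis b' -> n = m).
Proof.
move=> hq.
have hg := qs_group hq.
have hc : sm_commutative X by case: hq.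
have [mA [mU [mC _]]] := hg.
have beq := @basis_eq _ (@realm_mul K X) (realm_one X) mA
   (fun x => proj1 (mU x)) (fun x => proj2 (mU x)) mC.
split; [|split; [|split]].
- split => //; case: hq => _ [n [b hb]].
  by exists n, (fun i => realm_of (b i)); apply: qbasis_realm.
- by move=> n m c d h1 h2; exact: beq h1 h2.
- by move=> n m b c hb h2; exact: beq (qbasis_realm hc hb) h2.
- by move=> n m b b' hb hb'; exact: beq (qbasis_realm hc hb) (qbasis_realm hc hb').
Qed.
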